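(* Let $X$ be an algebraic K3 surface of Picard number $9$ carrying an even set of eight disjoint smooth rational curves $N_1,\dots,N_8$, and let $N\subseteq NS(X)$ be the minimal primitive sublattice containing $N_1,\dots,N_8$ (it is generated by the $N_i$ and $\hat N=\frac12(N_1+\dots+N_8)$). Let $L$ be a generator of the orthogonal complement $N^{\perp}\subseteq NS(X)$ with $L^2>0$, let $d$ be the positive integer with $L^2=2d$, and put $\mathcal{L}_{2d}=\mathbb{Z}L\oplus N$. Then: (1) if $L^2\equiv 2 \pmod 4$, then $NS(X)=\mathcal{L}_{2d}$; (2) if $L^2\equiv 0\pmod 4$, then either $NS(X)=\mathcal{L}_{2d}$, or $NS(X)=\mathcal{L}'_{2d}$, where $\mathcal{L}'_{2d}$ is the lattice generated by $\mathcal{L}_{2d}$ and a class $\frac{L+v}{2}$ with $v\in N$ satisfying: $v^2\in 4\mathbb{Z}$; $v\cdot N_i\in 2\mathbb{Z}$ for all $i$, and $v/2\notin N$; and $L^2\equiv -v^2 \pmod 8$.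
   Context: All varieties are over $\mathbb{C}$. A set of disjoint smooth rational curves $N_1,\dots,N_m$ on a smooth surface $X$ is an even set if there exists $\delta\in \mathrm{Pic}(X)$ with $N_1+\dots+N_m\sim 2\delta$ (linear equivalence). The Nikulin lattice is the even negative definite lattice $N$ of rank $8$ generated by classes $N_1,\dots,N_8$ and $\hat N=\frac12\sum_{i=1}^8 N_i$, with bilinear form determined by $N_i\cdot N_j=-2\delta_{ij}$; for an even set of eight disjoint smooth rational curves on a K3 surface, the minimal primitive sublattice of $NS(X)$ containing them is isometric to this lattice. $NS(X)$ denotes the Néron–Severi lattice with its intersection form. *)

(* Defs.v *)
(* The Neron-Severi lattice NS(X) of a K3 surface of Picard
   number 9 is modelled as Z^9 = 'rV[int]_9 with an integral Gram matrix G. *)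
From HB Require Import structures.
From mathcomp Require Import all_boot all_order all_algebra.
Set Implicit Arguments. Unset Strict Implicit. Unset Printing Implicit Defensive.
Import Order.TTheory GRing.Theory Num.Theory.
Local Open Scope ring_scope.

Definition lat := 'rV[int]_9.

Definition nsform (G : 'M[int]_9) (x y : lat) : int := (x *m G *m y^T) 0 0.

Definition even_lattice (G : 'M[int]_9) : Prop :=
  [/\ G^T = G, \det G != 0 & forall x : lat, (2 %| nsform G x x)%Z].

Definition in_span8 (N : 'I_8 -> lat) (x : lat) : Prop :=
  exists c : 'I_8 -> int, x = \sum_(i < 8) c i *: N i.

Definition in_Nik (N : 'I_8 -> lat) (hatN : lat) (x : lat) : Prop :=
  exists (c : 'I_8 -> int) (e : int), x = \sum_(i < 8) c i *: N i + e *: hatN.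

Definition in_L2d (N : 'I_8 -> lat) (hatN L : lat) (x : lat) : Prop :=
  exists (a : int) (y : lat), in_Nik N hatN y /\ x = a *: L + y.

(* x lies in the lattice generated by L_{2d} and w (= (L+v)/2) *)
Definition in_L2d' (N : 'I_8 -> lat) (hatN L w : lat) (x : lat) : Prop :=
  exists (b : int) (y : lat), in_L2d N hatN L y /\ x = y + b *: w.

(* Main.v *)
Require Import Defs.
From HB Require Import structures.
From mathcomp Require Import all_boot all_order all_algebra.
From mathcomp Require Import zify ring.
From Stdlib Require Import Classical.
Import Order.TTheory GRing.Theory Num.Theory.
Local Open Scope ring_scope.
Set Warnings "-notation-overridden,-ambiguous-paths".

Lemma nsformDl G x y z : nsform G (x + y) z = nsform G x z + nsform G y z.
Proof. by rewrite /nsform !mulmxDl mxE. Qed.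
Lemma nsformZl G (a : int) x z : nsform G (a *: x) z = a * nsform G x z.
Proof. by rewrite /nsform -!scalemxAl mxE. Qed.
Lemma nsformC G x y : G^T = G -> nsform G x y = nsform G y x.
Proof. move=> HG; rewrite /nsform; transitivity ((x *m G *m y^T)^T 0 0); first by rewrite [in RHS]mxE.
by rewrite !trmx_mul trmxK HG mulmxA. Qed.
Lemma nsform0l G z : nsform G 0 z = 0.
Proof. by rewrite /nsform !mul0mx mxE. Qed.
Lemma nsformNl G x z : nsform G (- x) z = - nsform G x z.
Proof. by rewrite -scaleN1r nsformZl mulN1r. Qed.
Lemma nsformBl G x y z : nsform G (x - y) z = nsform G x z - nsform G y z.
Proof. by rewrite nsformDl nsformNl. Qed.
Lemma nsform_suml G (F : 'I_8 -> lat) z : nsform G (\sum_i F i) z = \sum_i nsform G (F i) z.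
Proof. exact: (big_morph (fun x => nsform G x z) (fun x y => nsformDl G x y z) (nsform0l G z)). Qed.
Lemma nsformMnl G x z n : nsform G (x *+ n) z = nsform G x z *+ n.
Proof. elim: n => [|n IH]; first by rewrite !mulr0n nsform0l. by rewrite !mulrS nsformDl IH. Qed.

Lemma nsformZr G (a : int) x z : G^T = G -> nsform G x (a *: z) = a * nsform G x z.
Proof. move=> HG; by rewrite nsformC // nsformZl nsformC. Qed.
Lemma nsformBr G x y z : G^T = G -> nsform G x (y - z) = nsform G x y - nsform G x z.
Proof. move=> HG; by rewrite nsformC // nsformBl !(nsformC _ x). Qed.

Definition Pc (N : 'I_8 -> lat) (c : 'I_8 -> int) : lat := \sum_(i < 8) c i *: N i.

Lemma PcN N c : Pc N (fun i => - c i) = - Pc N c.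
Proof. rewrite /Pc -sumrN; apply: eq_bigr => i _; by rewrite scaleNr. Qed.
Lemma PcB N c c' : Pc N (fun i => c i - c' i) = Pc N c - Pc N c'.
Proof. rewrite /Pc -sumrB; apply: eq_bigr => i _; by rewrite scalerBl. Qed.

Lemma even_sq (c : int) : (2 %| c * c - c)%Z.
Proof.
apply/dvdzP.
have [q [->|->]] : exists q, c = q * 2 \/ c = q * 2 + 1 by exists (c %/ 2)%Z; lia.
- exists (q * (q * 2 - 1)); ring.
- exists ((q * 2 + 1) * q); ring.
Qed.

Lemma dvdz_sum8 (d : int) (F : 'I_8 -> int) : (forall i, (d %| F i)%Z) -> (d %| \sum_i F i)%Z.
Proof. move=> H; apply: (big_ind (fun x => (d %| x)%Z)); [exact: dvdz0 | move=> ? ?; exact: rpredD | move=> i _; exact: H]. Qed.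

Theorem proposition3p2 (G : 'M[int]_9) (N : 'I_8 -> lat) (hatN L : lat) :
  (* NS(X): even nondegenerate lattice of rank 9 *)
  even_lattice G ->
  (* classes of eight disjoint smooth rational curves *)
  (forall i j : 'I_8, nsform G (N i) (N j) = if i == j then -2 else 0) ->
  (* even set: N_1 + ... + N_8 = 2 hatN in NS(X) *)
  \sum_(i < 8) N i = hatN *+ 2 ->
  (* the minimal primitive sublattice containing the N_i is <N_i, hatN> *)
  (forall (k : int) (x : lat), 0 < k -> in_span8 N (k *: x) -> in_Nik N hatN x) ->
  (* L generates the orthogonal complement of N, and L^2 > 0 *)
  (forall i, nsform G L (N i) = 0) ->
  (forall x : lat, (forall i, nsform G x (N i) = 0) -> exists a : int, x = a *: L) ->
  0 < nsform G L L ->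
  (* (1) *)
  (((nsform G L L %% 4)%Z = 2 -> forall x : lat, in_L2d N hatN L x) /\
  (* (2) *)
   ((nsform G L L %% 4)%Z = 0 ->
      (forall x : lat, in_L2d N hatN L x) \/
      (exists v w : lat,
         [/\ in_Nik N hatN v, w *+ 2 = L + v & forall x : lat, in_L2d' N hatN L w x] /\
         [/\ (4 %| nsform G v v)%Z,
             (forall i, (2 %| nsform G v (N i))%Z),
             ~ (exists u : lat, in_Nik N hatN u /\ v = u *+ 2)
           & (nsform G L L = - nsform G v v %[mod 8])%Z]))).
Proof.
move=> [HGs _ Hev] HNN HsumN Hprim HLN Hperp Hpos.
set n := nsform G L L in Hpos *.
have HPN c j : nsform G (Pc N c) (N j) = c j * -2.
  rewrite /Pc nsform_suml (bigD1 j) //= nsformZl HNN eqxx big1 ?addr0 // => i /negbTE Hi.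
  by rewrite nsformZl HNN Hi mulr0.
have HPL c : nsform G (Pc N c) L = 0.
  rewrite /Pc nsform_suml big1 // => i _; by rewrite nsformZl nsformC // HLN mulr0.
have HPP c c' : nsform G (Pc N c) (Pc N c') = \sum_i c i * (c' i * -2).
  rewrite /Pc nsform_suml; apply: eq_bigr => i _; by rewrite nsformZl nsformC // HPN.
pose cx x := fun i => nsform G x (N i).
have decomp x : exists a, x *+ 2 = a *: L - Pc N (cx x).
  have [a Ha] : exists a, x *+ 2 + Pc N (cx x) = a *: L.
    apply: Hperp => j; rewrite nsformDl nsformMnl HPN /cx mulr2n; lia.
  by exists a; rewrite -Ha addrK.
have halfL2d y q c : y *+ 2 = (q * 2) *: L + Pc N c -> in_L2d N hatN L y.
  move=> Hy; exists q, (y - q *: L); split; last by rewrite addrC subrK.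
  apply: (Hprim 2) => //; exists c; apply/rowP => j.
  move/rowP/(_ j): Hy; rewrite !mxE /Pc !summxE => Hy.
  lia.
have sumc_even x : (2 %| \sum_i cx x i)%Z.
  have -> : \sum_i cx x i = nsform G hatN x *+ 2.
    rewrite -nsformMnl -HsumN nsform_suml; apply: eq_bigr => i _; by rewrite /cx nsformC.
  by rewrite mulr2n; apply/dvdzP; exists (nsform G hatN x); lia.
have S'4 x : (4 %| \sum_i cx x i * (cx x i * -2))%Z.
  have -> : \sum_i cx x i * (cx x i * -2) = (\sum_i cx x i * cx x i) * -2.
    rewrite mulr_suml; apply: eq_bigr => i _; by rewrite mulrA.
  have : (2 %| \sum_i cx x i * cx x i)%Z.
    have -> : \sum_i cx x i * cx x i = \sum_i cx x i + \sum_i (cx x i * cx x i - cx x i).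
      by rewrite -big_split /=; apply: eq_bigr => i _; rewrite addrC subrK.
    apply: rpredD; first exact: sumc_even.
    apply: dvdz_sum8 => i; exact: even_sq.
  move/dvdzP => [s ->]; apply/dvdzP; exists (- s); lia.
have sqeq x a : x *+ 2 = a *: L - Pc N (cx x) ->
    nsform G x x * 4 = a * a * n + \sum_i cx x i * (cx x i * -2).
  move=> Hx.
  have : nsform G (x *+ 2) (x *+ 2) = nsform G x x * 4.
    by rewrite nsformMnl nsformC // nsformMnl -mulrnA mulr_natr.
  rewrite Hx -HPP => <-.
  rewrite nsformBl !nsformBr // !nsformZl !nsformZr // HPL (nsformC G L) // HPL.
  rewrite -/n; ring.
have Xeven x : exists k, nsform G x x = k * 2.
  by have /dvdzP [k ->] := Hev x; exists k.
split.
- move=> Hn2 x.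
  have [a Ha] := decomp x.
  have [q [Hq|Hq]] : exists q, a = q * 2 \/ a = q * 2 + 1 by exists (a %/ 2)%Z; lia.
  + apply: (halfL2d x q (fun i => - cx x i)); by rewrite PcN -Hq.
  + exfalso.
    have E := sqeq x a Ha.
    have [k Hk] := Xeven x.
    have /dvdzP [s Hs] := S'4 x.
    rewrite Hk Hs Hq in E.
    have Hn : n = (k * 2 - s - (q * q + q) * n) * 4 by lia.
    lia.
- move=> Hn0.
  case: (classic (forall x, in_L2d N hatN L x)) => [Hall|Hnot]; first by left.
  right.
  have [x0 Hx0] := not_all_ex_not _ _ Hnot.
  have [a Ha] := decomp x0.
  have [q [Hq|Hq]] : exists q, a = q * 2 \/ a = q * 2 + 1 by exists (a %/ 2)%Z; lia.
    exfalso; apply: Hx0; apply: (halfL2d x0 q (fun i => - cx x0 i)); by rewrite PcN -Hq.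
  set c := cx x0.
  pose w := x0 - q *: L.
  pose v := Pc N (fun i => - c i).
  have Hw : w *+ 2 = L + v.
    rewrite /v PcN; apply/rowP => j.
    move/rowP/(_ j): Ha; rewrite /w !mxE => Ha.
    rewrite Hq in Ha; rewrite /c.
    set l := L 0 j in Ha *; set X := x0 0 j in Ha *; set p := Pc N _ 0 j in Ha *; lia.
  have Hvv : nsform G v v = \sum_i c i * (c i * -2).
    rewrite /v HPP; apply: eq_bigr => i _; by rewrite !mulNr mulrN opprK.
  exists v, w; split; [split|split].
  + by exists (fun i => - c i), 0; rewrite scale0r addr0.
  + exact: Hw.
  + move=> x.
    have [a' Ha'] := decomp x.
    have [q' [Hq'|Hq']] : exists q, a' = q * 2 \/ a' = q * 2 + 1 by exists (a' %/ 2)%Z; lia.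
      exists 0, x; split; last by rewrite scale0r addr0.
      apply: (halfL2d x q' (fun i => - cx x i)); by rewrite PcN -Hq'.
    exists 1, (x - w); split; last by rewrite scale1r subrK.
    apply: (halfL2d _ q' (fun i => c i - cx x i)).
    rewrite PcB; apply/rowP => j.
    move/rowP/(_ j): Ha'; move/rowP/(_ j): Hw.
    rewrite /v PcN /w !mxE => Hw Ha'.
    rewrite Hq' in Ha'; rewrite /c in Hw *.
    set l := L 0 j in Ha' Hw *; set X := x 0 j in Ha' Hw *; set X0 := x0 0 j in Ha' Hw *.
    set p1 := Pc N (cx x0) 0 j in Ha' Hw *; set p2 := Pc N (cx x) 0 j in Ha' Hw *.
    lia.
  + rewrite Hvv; exact: S'4.
  + move=> i; rewrite /v HPN; apply/dvdzP; exists (c i); lia.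
  + move=> [u [_ Hu]].
    have HL : L = (w - u) *+ 2 by rewrite mulrnBl Hw Hu addrK.
    have [b Hb] : exists b, w - u = b *: L.
      apply: Hperp => j.
      have := HLN j; rewrite {1}HL nsformMnl mulr2n; lia.
    have : n = (b * 2) * n.
      by rewrite {1}/n {1}HL Hb nsformMnl nsformZl mulr2n; ring.
    move=> Hbn.
    have : (1 - b * 2) * n = 0 by rewrite mulrBl mul1r -Hbn subrr.
    move/eqP; rewrite mulf_eq0 => /orP [/eqP|/eqP]; lia.
  + apply/eqP; rewrite eqz_mod_dvd Hvv; apply/dvdzP.
    have E := sqeq x0 a Ha.
    have [k Hk] := Xeven x0.
    have [m Hm] : exists m, n = m * 4 by exists (n %/ 4)%Z; lia.
    rewrite Hk Hq Hm in E.
    exists (k - (q * q + q) * m * 2).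
    rewrite Hm.
    rewrite /c; set S := \sum_i _ in E *; lia.
Qed.
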